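(* Let $\Delta\in\mathcal{H}_{\ge 3}$ be a hypergraph on $[d]$ and let $F$ be a finite set of atoms of the form $(c_1\not\sim c_2)$ with $c_1\ne c_2\in[d]$. Then there exists a unique hypergraph $\Delta_F$ on $[d]$ that is minimal (with respect to $\le$) among the hypergraphs $\widetilde\Delta$ satisfying: (1) $\Delta\le\widetilde\Delta$; (2) there is no atom $(c_1\not\sim c_2)$ in $F$ and no pair of distinct edges $e_1,e_2\in\widetilde\Delta$ with $\{c_1,c_2\}\subseteq e_1\cap e_2$.
   Context: A hypergraph on the vertex set $[d]$ is a collection $\Delta$ of subsets of $[d]$ (edges) such that no edge is a proper subset of another edge. For hypergraphs $\Delta_1,\Delta_2$, $\Delta_1\le\Delta_2$ means that every edge of $\Delta_1$ is contained in some edge of $\Delta_2$. $\mathcal{H}_{\ge3}$ is the set of hypergraphs all of whose edges have size at least $3$. *)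

(* Defs.v *)
From mathcomp Require Import all_boot.
Set Implicit Arguments. Unset Strict Implicit. Unset Printing Implicit Defensive.

Definition is_hypergraph (d : nat) (D : {set {set 'I_d}}) : Prop :=
  forall e f, e \in D -> f \in D -> ~~ (e \proper f).

Definition hle (d : nat) (D1 D2 : {set {set 'I_d}}) : Prop :=
  forall e, e \in D1 -> exists2 f, f \in D2 & e \subset f.

Definition H_ge3 (d : nat) (D : {set {set 'I_d}}) : Prop :=
  forall e, e \in D -> 3 <= #|e|.

(* An atom (c1 !~ c2) is represented by the pair (c1, c2), with c1 <> c2. *)
Definition valid_atoms (d : nat) (F : {set 'I_d * 'I_d}) : Prop :=
  forall c, c \in F -> c.1 != c.2.

Definition atoms_separated (d : nat) (F : {set 'I_d * 'I_d})
    (D : {set {set 'I_d}}) : Prop :=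
  forall c e1 e2, c \in F -> e1 \in D -> e2 \in D -> e1 != e2 ->
    ~~ ([set c.1; c.2] \subset e1 :&: e2).

Definition admissible (d : nat) (Delta : {set {set 'I_d}})
    (F : {set 'I_d * 'I_d}) (D : {set {set 'I_d}}) : Prop :=
  [/\ is_hypergraph D, hle Delta D & atoms_separated F D].

Definition minimal_admissible (d : nat) (Delta : {set {set 'I_d}})
    (F : {set 'I_d * 'I_d}) (D : {set {set 'I_d}}) : Prop :=
  admissible Delta F D /\
  (forall D', admissible Delta F D' -> hle D' D -> D' = D).

(* Main.v *)
Require Import Defs.
From mathcomp Require Import all_boot.
From mathcomp Require Import zify.
Set Implicit Arguments. Unset Strict Implicit. Unset Printing Implicit Defensive.

Definition bad (d : nat) (F : {set 'I_d * 'I_d}) (A : {set {set 'I_d}}) : bool :=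
  [exists c, [exists e1, [exists e2, [&& c \in F, e1 \in A, e2 \in A, e1 != e2 &
     [set c.1; c.2] \subset e1 :&: e2]]]].

Lemma nobad_sep d (F : {set 'I_d * 'I_d}) A : ~~ bad F A -> atoms_separated F A.
Proof.
move=> nb c e1 e2 cF e1A e2A ne; apply/negP => sub; move/negP: nb; apply.
apply/existsP; exists c; apply/existsP; exists e1; apply/existsP; exists e2.
by rewrite cF e1A e2A ne sub.
Qed.

Lemma hle_trans d (A B C : {set {set 'I_d}}) : hle A B -> hle B C -> hle A C.
Proof.
move=> hab hbc e /hab [f /hbc [g gC fg] ef]; exists g => //; exact: subset_trans ef fg.
Qed.

Lemma hle_refl d (A : {set {set 'I_d}}) : hle A A.
Proof. by move=> e eA; exists e. Qed.

Lemma merge_le d (A : {set {set 'I_d}}) e1 e2 :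
  hle A (e1 :|: e2 |: (A :\ e1 :\ e2)).
Proof.
move=> e eA. case: (eqVneq e e1) => [->|ne1].
  by exists (e1 :|: e2); [rewrite setU11 | exact: subsetUl].
case: (eqVneq e e2) => [->|ne2].
  by exists (e1 :|: e2); [rewrite setU11 | exact: subsetUr].
exists e => //. by rewrite !inE ne1 ne2 eA orbT.
Qed.

Lemma merge_card d (A : {set {set 'I_d}}) e1 e2 :
  e1 \in A -> e2 \in A -> e1 != e2 -> #|e1 :|: e2 |: (A :\ e1 :\ e2)| < #|A|.
Proof.
move=> e1A e2A ne.
have h1 := cardsD1 e1 A; have h2 := cardsD1 e2 (A :\ e1).
have e2A' : e2 \in A :\ e1 by rewrite !inE eq_sym ne e2A.
rewrite e1A in h1; rewrite e2A' in h2.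
rewrite cardsU1.
have := leq_b1 (e1 :|: e2 \notin A :\ e1 :\ e2).
move: (nat_of_bool _) => b. rewrite /= add1n in h1 h2. rewrite h1 h2. by move=> hb; rewrite ltnS leq_add2r.
Qed.

Lemma merge_P d (F : {set 'I_d * 'I_d}) (A D : {set {set 'I_d}}) e1 e2 c :
  atoms_separated F D -> hle A D -> c \in F -> e1 \in A -> e2 \in A ->
  [set c.1; c.2] \subset e1 :&: e2 ->
  hle (e1 :|: e2 |: (A :\ e1 :\ e2)) D.
Proof.
move=> sep hAD cF e1A e2A sub e; rewrite !inE => /orP [/eqP ->|/andP [_ /andP [_ eA]]];
  last exact: hAD.
have [f1 f1D s1] := hAD e1 e1A; have [f2 f2D s2] := hAD e2 e2A.
case: (eqVneq f1 f2) => [eqf|nef].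
  by exists f1 => //; rewrite subUset s1 eqf s2.
exfalso; have := sep c f1 f2 cF f1D f2D nef; move/negP; apply.
exact: subset_trans sub (setISS s1 s2).
Qed.

Lemma exist_closure d (Delta : {set {set 'I_d}}) (F : {set 'I_d * 'I_d}) :
  forall n (A : {set {set 'I_d}}), #|A| <= n -> hle Delta A ->
  (forall D, atoms_separated F D -> hle Delta D -> hle A D) ->
  exists A', [/\ hle Delta A', (forall D, atoms_separated F D -> hle Delta D -> hle A' D)
              & atoms_separated F A'].
Proof.
elim=> [|n IH] A hn h1 h2; case: (boolP (bad F A)) =>
  [/existsP [c /existsP [e1 /existsP [e2 /and5P [cF e1A e2A ne sub]]]]|nb];
  try by exists A; split => //; exact: nobad_sep.
  by move: hn; rewrite leqn0 => /eqP/cards0_eq A0; rewrite A0 inE in e1A.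
apply: (IH (e1 :|: e2 |: (A :\ e1 :\ e2))).
- have h := merge_card e1A e2A ne; rewrite -ltnS; exact: leq_trans h hn.
- apply: (hle_trans h1). apply: merge_le.
- move=> D sepD hD; exact: merge_P sepD (h2 D sepD hD) cF e1A e2A sub.
Qed.

Definition maxel d (A : {set {set 'I_d}}) :=
  [set e in A | [forall f in A, ~~ (e \proper f)]].

Lemma maxel_sub d (A : {set {set 'I_d}}) : maxel A \subset A.
Proof. by apply/subsetP => e; rewrite inE => /andP []. Qed.

Lemma maxel_hyp d (A : {set {set 'I_d}}) : is_hypergraph (maxel A).
Proof.
move=> e f; rewrite inE => /andP [_ /forall_inP H] fM.
exact: H f ((subsetP (maxel_sub A)) f fM).
Qed.

Lemma maxel_le d (A : {set {set 'I_d}}) : hle A (maxel A).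
Proof.
move=> e eA.
pose P := [pred f | (f \in A) && (e \subset f)].
have Pe : P e by rewrite /P /= eA subxx.
case: (@arg_maxnP _ e P (fun f => #|f|) Pe) => g /andP [gA eg] gmax.
exists g => //. rewrite inE gA; apply/forall_inP => f fA; apply/negP => gf.
have := gmax f; rewrite /P /= fA (subset_trans eg (proper_sub gf)) => /(_ isT).
by rewrite leqNgt (proper_card gf).
Qed.

Lemma hle_sub d (X Y : {set {set 'I_d}}) :
  is_hypergraph X -> hle X Y -> hle Y X -> X \subset Y.
Proof.
move=> hX hXY hYX; apply/subsetP => e eX.
have [f fY ef] := hXY e eX; have [g gX fg] := hYX f fY.
have eg := subset_trans ef fg.
case: (eqVneq e g) => [eg'|neg]; last first.
  by have := hX e g eX gX; rewrite properEneq neg eg.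
subst g. have -> : e = f by apply/eqP; rewrite eqEsubset ef fg.
done.
Qed.

Lemma hle_antisym d (X Y : {set {set 'I_d}}) :
  is_hypergraph X -> is_hypergraph Y -> hle X Y -> hle Y X -> X = Y.
Proof.
move=> hX hY hXY hYX; apply/eqP; rewrite eqEsubset.
by rewrite (hle_sub hX hXY hYX) (hle_sub hY hYX hXY).
Qed.

Theorem mainTheorem3 (d : nat) (Delta : {set {set 'I_d}})
    (F : {set 'I_d * 'I_d}) :
  is_hypergraph Delta -> H_ge3 Delta -> valid_atoms F ->
  exists! DF : {set {set 'I_d}}, minimal_admissible Delta F DF.
Proof.
move=> hD _ _.
have [A [hA PA sepA]] := @exist_closure _ Delta F #|Delta| Delta (leqnn #|Delta|) (@hle_refl _ Delta)
  (fun D _ h => h).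
have adm : admissible Delta F (maxel A).
  split; [exact: maxel_hyp | exact: hle_trans hA (@maxel_le _ A) |].
  move=> c e1 e2 cF e1M e2M ne.
  exact: sepA c e1 e2 cF ((subsetP (maxel_sub A)) _ e1M) ((subsetP (maxel_sub A)) _ e2M) ne.
have least : forall D, admissible Delta F D -> hle (maxel A) D.
  move=> D [_ hDD sD] e eM; exact: PA D sD hDD e ((subsetP (maxel_sub A)) e eM).
exists (maxel A); split.
  split => // D' admD' le.
  apply: hle_antisym => //; [by case: admD' | exact: maxel_hyp | exact: least].
move=> DF [admDF minDF]; exact: minDF (maxel A) adm (least DF admDF).
Qed.
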